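(* Let $\kappa$ be an uncountable regular cardinal, let $\mathcal{I}$ be a $\kappa$-complete proper ideal on $\kappa$ containing every bounded subset of $\kappa$, and suppose $\mathcal{I}$ has a basis of size $\kappa$. Let $\nu\in\{2,\kappa\}$. Then the $\mathcal{I}$-Borel hierarchy on ${}^{\kappa}\nu$ is increasing: for all ordinals $1\le\alpha<\beta$, $\boldsymbol{\Sigma}^0_\alpha({}^{\kappa}\nu,\tau_{\mathcal{I}})\subseteq\boldsymbol{\Sigma}^0_\beta({}^{\kappa}\nu,\tau_{\mathcal{I}})$.
   Context: A basis for $\mathcal{I}$ is a family $\mathcal{B}\subseteq\mathcal{I}$ such that every member of $\mathcal{I}$ is contained in some member of $\mathcal{B}$. ${}^{\kappa}\nu$ is the set of functions $\kappa\to\nu$; $\tau_{\mathcal{I}}$ is the topology generated by the sets $\mathbf{N}_f=\{x:f\subseteq x\}$ for $f\colon D\to\nu$ with $D\in\mathcal{I}$. $\boldsymbol{\Sigma}^0_1$ = $\tau_{\mathcal{I}}$-open sets, $\boldsymbol{\Pi}^0_1$ = $\tau_{\mathcal{I}}$-closed sets; for $\alpha>1$, $\boldsymbol{\Sigma}^0_\alpha$ is the family of unions $\bigcup_{\gamma<\kappa}A_\gamma$ with $A_\gamma\in\bigcup_{1\le\beta<\alpha}\boldsymbol{\Pi}^0_\beta$, and $\boldsymbol{\Pi}^0_\alpha$ the complements of $\boldsymbol{\Sigma}^0_\alpha$ sets. *)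

(* Defs.v *)
Set Implicit Arguments.

Definition injective {A B : Type} (f : A -> B) := forall x y, f x = f y -> x = y.
Definition bijective_fun {A B : Type} (f : A -> B) :=
  injective f /\ (forall b, exists a, f a = b).

Definition is_wellorder {T : Type} (lt : T -> T -> Prop) :=
  well_founded lt /\ (forall x y z, lt x y -> lt y z -> lt x z) /\
  (forall x y, lt x y \/ x = y \/ lt y x).

Definition card_lt (J K : Type) :=
  (exists f : J -> K, injective f) /\ ~ (exists g : K -> J, injective g).

(* (K, lt) is (the order type of) an uncountable regular cardinal kappa:
   a well-order, every proper initial segment has smaller cardinality (so it is
   a cardinal), K does not inject into nat (uncountable), and every unbounded
   subset of K has cardinality kappa (regular). *)
Definition uncountable_regular_cardinal (K : Type) (lt : K -> K -> Prop) :=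
  is_wellorder lt /\
  (forall x, ~ exists f : K -> {y : K | lt y x}, injective f) /\
  ~ (exists f : K -> nat, injective f) /\
  (forall A : K -> Prop, (forall x, exists y, A y /\ lt x y) ->
      exists f : K -> {y : K | A y}, injective f).

Definition kappa_complete_proper_ideal (K : Type) (I : (K -> Prop) -> Prop) :=
  I (fun _ => False) /\
  (forall A B : K -> Prop, I A -> (forall x, B x -> A x) -> I B) /\
  (forall A B : K -> Prop, I A -> I B -> I (fun x => A x \/ B x)) /\
  (forall (J : Type) (F : J -> K -> Prop), card_lt J K ->
      (forall j, I (F j)) -> I (fun x => exists j, F j x)) /\
  ~ I (fun _ => True).

Definition contains_bounded (K : Type) (lt : K -> K -> Prop) (I : (K -> Prop) -> Prop) :=
  forall (A : K -> Prop) (x : K), (forall y, A y -> lt y x) -> I A.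

Definition has_basis_of_size_kappa (K : Type) (I : (K -> Prop) -> Prop) :=
  exists B : (K -> Prop) -> Prop,
    (forall A, B A -> I A) /\
    (forall A, I A -> exists C, B C /\ forall x, A x -> C x) /\
    (exists f : K -> {C : K -> Prop | B C}, bijective_fun f).

Inductive generated_open {X : Type} (S : (X -> Prop) -> Prop) : (X -> Prop) -> Prop :=
| go_sub : forall U, S U -> generated_open S U
| go_full : generated_open S (fun _ => True)
| go_inter : forall U W, generated_open S U -> generated_open S W ->
    generated_open S (fun x => U x /\ W x)
| go_union : forall F : (X -> Prop) -> Prop, (forall U, F U -> generated_open S U) ->
    generated_open S (fun x => exists U, F U /\ U x).

Definition N_sets (K V : Type) (I : (K -> Prop) -> Prop) : ((K -> V) -> Prop) -> Prop :=
  fun U => exists (D : K -> Prop) (f : {d : K | D d} -> V),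
    I D /\ U = (fun x => forall (d : K) (h : D d), x d = f (exist _ d h)).

Definition tauI_open (K V : Type) (I : (K -> Prop) -> Prop) : ((K -> V) -> Prop) -> Prop :=
  generated_open (@N_sets K V I).

(* The I-Borel hierarchy, indexed by a well-order (O, ltO): the element of O at
   position xi represents the ordinal level 1 + xi (so minimal elements are
   level 1). *)
Inductive Sigma0 (K V : Type) (I : (K -> Prop) -> Prop) (O : Type) (ltO : O -> O -> Prop)
  : O -> ((K -> V) -> Prop) -> Prop :=
| S_open : forall a A, (forall b, ~ ltO b a) -> @tauI_open K V I A -> @Sigma0 K V I O ltO a A
| S_union : forall a (F : K -> (K -> V) -> Prop),
    (exists b, ltO b a) ->
    (forall g, exists b, ltO b a /\ @Sigma0 K V I O ltO b (fun x => ~ F g x)) ->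
    @Sigma0 K V I O ltO a (fun x => exists g, F g x).

Definition Pi0 (K V : Type) (I : (K -> Prop) -> Prop) (O : Type) (ltO : O -> O -> Prop)
  (a : O) (B : (K -> V) -> Prop) : Prop := @Sigma0 K V I O ltO a (fun x => ~ B x).

Definition hierarchy_increasing (K V : Type) (I : (K -> Prop) -> Prop) : Prop :=
  forall (O : Type) (ltO : O -> O -> Prop), is_wellorder ltO ->
    forall (a b : O), ltO a b ->
    forall A : (K -> V) -> Prop, @Sigma0 K V I O ltO a A -> @Sigma0 K V I O ltO b A.

(* Main.v *)
Require Import Defs.
From Stdlib Require Import FunctionalExtensionality PropExtensionality Classical.

Definition agree {K V : Type} (D : K -> Prop) (y x : K -> V) :=
  forall d, D d -> y d = x d.

Lemma open_nbhd (K V : Type) (I : (K -> Prop) -> Prop)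
  (HI0 : I (fun _ => False))
  (HIU : forall A B : K -> Prop, I A -> I B -> I (fun x => A x \/ B x)) :
  forall U, @tauI_open K V I U -> forall x, U x ->
    exists D, I D /\ forall y, agree D y x -> U y.
Proof.
  unfold tauI_open. intros U HU. induction HU as [U HS| |U W _ IH1 _ IH2|F _ IH].
  - destruct HS as [D [f [HD ->]]]. intros x Hx. exists D. split; [exact HD|].
    intros y Hy d h. rewrite (Hy d h). apply Hx.
  - intros x _. exists (fun _ => False). split; auto.
  - intros x [Hx1 Hx2]. destruct (IH1 x Hx1) as [D1 [HD1 H1]].
    destruct (IH2 x Hx2) as [D2 [HD2 H2]].
    exists (fun z => D1 z \/ D2 z). split; [auto|].
    intros y Hy. split; [apply H1 | apply H2]; intros d h; apply Hy; auto.
  - intros x [U0 [HF Hx]]. destruct (IH U0 HF x Hx) as [D [HD H]].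
    exists D. split; [exact HD|]. intros y Hy. exists U0. split; auto.
Qed.

Lemma nbhd_open (K V : Type) (I : (K -> Prop) -> Prop) (W : (K -> V) -> Prop) :
  (forall x, W x -> exists D, I D /\ forall y, agree D y x -> W y) ->
  @tauI_open K V I W.
Proof.
  intros H.
  set (Fam := fun U : (K -> V) -> Prop => exists x D, W x /\ I D /\
     (forall y, agree D y x -> W y) /\ U = (fun y => agree D y x)).
  assert (E : W = (fun z => exists U, Fam U /\ U z)).
  { apply functional_extensionality; intro z. apply propositional_extensionality.
    split.
    - intro Hz. destruct (H z Hz) as [D [HD HW]].
      exists (fun y => agree D y z). split; [|intros d _; reflexivity].
      exists z, D. auto.
    - intros [U [[x [D [_ [_ [HW ->]]]]] Hz]]. apply HW; exact Hz. }
  rewrite E. unfold tauI_open. apply go_union.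
  intros U [x [D [_ [HD [_ ->]]]]]. apply go_sub.
  exists D, (fun p => x (proj1_sig p)). split; [exact HD|].
  reflexivity.
Qed.

Lemma open_union_clopen (K V : Type) (I : (K -> Prop) -> Prop)
  (HI : kappa_complete_proper_ideal I) (HB : has_basis_of_size_kappa I) :
  forall U, @tauI_open K V I U ->
  exists Ui : K -> (K -> V) -> Prop,
    U = (fun x => exists i, Ui i x) /\ forall i, @tauI_open K V I (fun x => ~ Ui i x).
Proof.
  destruct HI as [HI0 [_ [HIU _]]].
  destruct HB as [B [HBI [HBc [f [_ Hsurj]]]]].
  intros U HU.
  exists (fun i x => forall y, agree (proj1_sig (f i)) y x -> U y).
  split.
  - apply functional_extensionality; intro x. apply propositional_extensionality.
    split.
    + intro Hx. destruct (@open_nbhd K V I HI0 HIU U HU x Hx) as [D [HD HU']].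
      destruct (HBc D HD) as [C [HC HDC]].
      destruct (Hsurj (exist _ C HC)) as [i Hi].
      exists i. intros y Hy. apply HU'. intros d hd. apply Hy.
      rewrite Hi. simpl. auto.
    + intros [i Hi]. apply Hi. intros d _; reflexivity.
  - intro i. apply nbhd_open. intros x Hx.
    exists (proj1_sig (f i)). split; [apply HBI; exact (proj2_sig (f i))|].
    intros y Hy Hy'. apply Hx. intros z Hz. apply Hy'.
    intros d hd. rewrite (Hz d hd). symmetry. apply Hy; exact hd.
Qed.

Lemma incr_gen (K V : Type) (lt : K -> K -> Prop) (I : (K -> Prop) -> Prop) :
  kappa_complete_proper_ideal I ->
  has_basis_of_size_kappa I ->
  @hierarchy_increasing K V I.
Proof.
  intros HI HB O ltO [_ [Htr _]] a b Hab A HA.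
  destruct HA as [a A Hmin Hopen | a F [b0 Hb0] HF].
  - destruct (@open_union_clopen K V I HI HB A Hopen) as [Ui [-> HUi]].
    apply S_union.
    + exists a; exact Hab.
    + intro g. exists a. split; [exact Hab|]. apply S_open; auto.
  - apply S_union.
    + exists a; exact Hab.
    + intro g. destruct (HF g) as [c [Hc Hs]]. exists c. split; [|exact Hs].
      eapply Htr; eauto.
Qed.

Theorem corollary4p5 (K : Type) (lt : K -> K -> Prop) (I : (K -> Prop) -> Prop) :
  uncountable_regular_cardinal lt ->
  kappa_complete_proper_ideal I ->
  contains_bounded lt I ->
  has_basis_of_size_kappa I ->
  @hierarchy_increasing K bool I /\ @hierarchy_increasing K K I.
Proof.
  intros _ HI _ HB. split; eapply (@incr_gen _ _ lt); eauto.
Qed.
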